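(* Let $d\ge1$, let $Z$ be a simple $d$-cycle, and let $s\ge1$. Deleting any $s$ vertices from the facet graph $G_d(Z)$ leaves a graph with at most $s$ connected components.
   Context: Fix a field $\mathbb F$. A $d$-simplex is a $(d+1)$-element subset of $[n]$ oriented by increasing order $s_1<\dots<s_{d+1}$. A $d$-chain is a formal $\mathbb F$-combination of $d$-simplices with support the set of simplices with nonzero coefficient; $\partial\sigma=\sum_i(-1)^{i-1}(\sigma\setminus\{s_i\})$, extended linearly. A $d$-cycle is a chain with $\partial Z=0$; it is simple if $Z\ne0$ and every $d$-cycle supported in $\mathrm{Supp}(Z)$ is a scalar multiple of $Z$. The facet graph $G_d(Z)$ has vertex set $\mathrm{Supp}(Z)$, two $d$-simplices adjacent iff they share a $(d-1)$-face. *)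

(* Defs.v *)
From HB Require Import structures.
From mathcomp Require Import all_boot all_order all_algebra.
Set Implicit Arguments. Unset Strict Implicit. Unset Printing Implicit Defensive.
Import GRing.Theory.
Local Open Scope ring_scope.

Definition chain (n : nat) (F : fieldType) := {ffun {set 'I_n} -> F}.

Definition is_dchain (n d : nat) (F : fieldType) (Z : chain n F) : Prop :=
  forall sigma : {set 'I_n}, Z sigma != 0 -> #|sigma| = d.+1.

Definition Supp (n : nat) (F : fieldType) (Z : chain n F) : {set {set 'I_n}} :=
  [set sigma | Z sigma != 0].

(* position (0-based) of v in sigma ordered increasingly *)
Definition pos (n : nat) (v : 'I_n) (sigma : {set 'I_n}) : nat :=
  #|[set x in sigma | x < v]|%N.

(* boundary of a single simplex: sum_i (-1)^(i-1) (sigma \ {s_i}) *)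
Definition bd_simplex (n : nat) (F : fieldType) (sigma : {set 'I_n}) : chain n F :=
  [ffun tau => \sum_(v in sigma)
     (if tau == sigma :\ v then (-1) ^+ pos v sigma else 0)].

Definition boundary (n : nat) (F : fieldType) (Z : chain n F) : chain n F :=
  [ffun tau => \sum_(sigma : {set 'I_n}) Z sigma * bd_simplex F sigma tau].

Definition is_dcycle (n d : nat) (F : fieldType) (Z : chain n F) : Prop :=
  is_dchain d Z /\ boundary Z = 0.

Definition simple_dcycle (n d : nat) (F : fieldType) (Z : chain n F) : Prop :=
  [/\ is_dcycle d Z, Z != 0 &
      forall Z' : chain n F, is_dcycle d Z' -> Supp Z' \subset Supp Z ->
        exists c : F, Z' = [ffun sigma => c * Z sigma]].

Definition facet_adj (n d : nat) (sigma tau : {set 'I_n}) : bool :=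
  (sigma != tau) &&
  [exists f : {set 'I_n}, [&& #|f| == d, f \subset sigma & f \subset tau]].

Definition induced_adj (n d : nat) (V : {set {set 'I_n}}) : rel {set 'I_n} :=
  fun sigma tau => [&& sigma \in V, tau \in V & facet_adj d sigma tau].

Definition components (n d : nat) (V : {set {set 'I_n}}) : {set {set {set 'I_n}}} :=
  [set [set tau in V | connect (induced_adj d V) sigma tau] | sigma in V].

(* Main.v *)
Require Import Defs.
From HB Require Import structures.
From mathcomp Require Import all_boot all_order all_algebra.
Set Implicit Arguments. Unset Strict Implicit. Unset Printing Implicit Defensive.
Import GRing.Theory.

Section Helpers.
Local Open Scope ring_scope.
Variables (F : fieldType) (n : nat).
Implicit Types (sigma tau rho : {set 'I_n}) (v w : 'I_n).

Lemma posD1_lt sigma v w : v \in sigma -> (v < w)%N ->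
  pos w sigma = (pos w (sigma :\ v)).+1.
Proof.
move=> vs vw; rewrite /pos (cardsD1 v [set x in sigma | (x < w)%N]) inE vs vw /= add1n.
congr (_.+1); apply: eq_card => x; rewrite !inE; by case: (x == v).
Qed.

Lemma posD1_gt sigma v w : (w < v)%N -> pos w (sigma :\ v) = pos w sigma.
Proof.
move=> wv; rewrite /pos; apply: eq_card => x; rewrite !inE.
case: (eqVneq x v) => [->|] //=; by rewrite ltnNge ltnW ?andbF.
Qed.

Lemma bd_face sigma v : v \in sigma ->
  bd_simplex F sigma (sigma :\ v) = (-1) ^+ pos v sigma.
Proof.
move=> vs; rewrite ffunE (big_setD1 v) //= eqxx big1 ?addr0 // => w /setD1P [wv ws].
rewrite ifN //; apply/eqP => /setP /(_ w); by rewrite !inE eqxx ws wv.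
Qed.

Lemma bd_support sigma tau : bd_simplex F sigma tau != 0 ->
  exists2 v, v \in sigma & tau = sigma :\ v.
Proof.
rewrite ffunE => H.
case: (pickP [pred v | (v \in sigma) && (tau == sigma :\ v)]) => [v /andP[vs /eqP ->]|none].
  by exists v.
case/negP: H; rewrite big1 // => v vs; have := none v; rewrite /= vs /= => ->.
by [].
Qed.

Lemma sum_bd_mul sigma (g : {set 'I_n} -> F) :
  \sum_rho bd_simplex F sigma rho * g rho = \sum_(v in sigma) (-1) ^+ pos v sigma * g (sigma :\ v).
Proof.
rewrite (eq_bigr (fun rho => \sum_(v in sigma)
   (if rho == sigma :\ v then (-1) ^+ pos v sigma * g rho else 0))); last first.
  move=> rho _; rewrite ffunE mulr_suml; apply: eq_bigr => v _.
  by case: eqP => _; rewrite ?mul0r.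
rewrite exchange_big; apply: eq_bigr => v _.
rewrite (bigD1 (sigma :\ v)) //= eqxx big1 ?addr0 // => rho /negbTE -> //.
Qed.

Lemma antisym_sum (A : {set 'I_n}) (G : 'I_n -> 'I_n -> F) :
  (forall v, G v v = 0) ->
  (forall v w, v \in A -> w \in A -> G w v = - G v w) ->
  \sum_(v in A) \sum_(w in A) G v w = 0.
Proof.
move=> G0 Ga.
have E v w : G v w = (if (v < w)%N then G v w else 0) + (if (w < v)%N then G v w else 0).
  case: ltngtP => [//|//|/val_inj ->]; first by rewrite addr0.
  by rewrite add0r.
  by rewrite G0 addr0.
under eq_bigr do under eq_bigr do rewrite E.
under eq_bigr do rewrite big_split /=.
rewrite big_split /= [X in _ + X]exchange_big /= -big_split /=.
apply: big1 => v vA; rewrite -big_split /=; apply: big1 => w wA.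
by case: ifP => _; rewrite ?addr0 // (Ga v w) ?addrN.
Qed.

Lemma boundary_bd sigma : boundary (bd_simplex F sigma) = 0.
Proof.
apply/ffunP => tau; rewrite !ffunE sum_bd_mul.
pose G v w := if (w != v) && (tau == sigma :\ v :\ w)
   then (-1) ^+ (pos v sigma + pos w (sigma :\ v)) else 0 : F.
rewrite (eq_bigr (fun v => \sum_(w in sigma) G v w)); last first.
  move=> v vs; rewrite ffunE mulr_sumr (big_setD1 v vs) /= {1}/G eqxx /= add0r.
  apply: eq_bigr => w /setD1P [wv ws]; rewrite /G wv /=.
  by case: eqP; rewrite ?mulr0 // exprD.
apply: antisym_sum => [v|v w vs ws]; first by rewrite /G eqxx.
rewrite /G eq_sym; case: (eqVneq v w) => [->|wv] /=; first by rewrite oppr0.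
have -> : sigma :\ w :\ v = sigma :\ v :\ w by rewrite setDDl setUC -setDDl.
case: eqP => _; last by rewrite oppr0.
case: (ltngtP v w) => [lt|gt|/val_inj E]; last by rewrite E eqxx in wv.
- rewrite (@posD1_gt sigma w v lt) (@posD1_lt sigma v w vs lt).
  by rewrite addSn exprS mulN1r addnC.
- rewrite (@posD1_gt sigma v w gt) (@posD1_lt sigma w v ws gt).
  by rewrite addSn exprS mulN1r opprK addnC.
Qed.

Lemma boundary_boundary (Y : chain n F) : boundary (boundary Y) = 0.
Proof.
apply/ffunP => tau; rewrite !ffunE.
under eq_bigr do rewrite ffunE mulr_suml.
rewrite exchange_big; apply: big1 => sigma _.
under eq_bigr do rewrite -mulrA.
rewrite -mulr_sumr.
have := congr1 (fun x : chain n F => x tau) (boundary_bd sigma); rewrite !ffunE => ->.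
by rewrite mulr0.
Qed.

Lemma boundary_supp (Y : chain n F) tau : boundary Y tau != 0 ->
  exists2 sigma, Y sigma != 0 & exists2 v, v \in sigma & tau = sigma :\ v.
Proof.
rewrite ffunE => H.
case: (pickP [pred sigma | (Y sigma != 0) && (bd_simplex F sigma tau != 0)]) =>
  [sigma /andP[Ys /bd_support bs]|none]; first by exists sigma.
case/negP: H; rewrite big1 // => sigma _; have := none sigma => /=.
by case: eqP => [->|_] /=; [rewrite mul0r | move/negbFE/eqP ->; rewrite mulr0].
Qed.

Lemma cycle_supp d (c : chain n F) f : (0 < d)%N -> boundary c = 0 ->
  (forall tau, c tau != 0 -> #|tau| = d) -> c f != 0 -> (d.+1 <= #|Supp c|)%N.
Proof.
move=> d0 bc0 hd cf.
pose P v := [pred g | [&& c g != 0, g != f & f :\ v \subset g]].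
have ex v : v \in f -> exists g, P v g.
  move=> vf; have := congr1 (fun x : chain n F => x (f :\ v)) bc0.
  rewrite !ffunE (bigD1 f) //= bd_face // => H.
  case: (pickP (P v)) => [g Hg|none]; first by exists g.
  exfalso; move: H; rewrite big1 ?addr0.
    by move/eqP; rewrite mulf_eq0 signr_eq0 orbF (negbTE cf).
  move=> g gf; have := none g; rewrite /= gf /=.
  case: (eqVneq (c g) 0) => [->|cg0]; first by rewrite mul0r.
  case: (eqVneq (bd_simplex F g (f :\ v)) 0) => [->|/bd_support [w wg E]].
    by rewrite mulr0.
  by rewrite E subsetDl.
pose phi v := odflt f [pick g | P v g].
have phiP v : v \in f -> P v (phi v).
  move/ex => [g Pg]; rewrite /phi; case: pickP => [h Ph|none]; first by [].
  by move: (none g); rewrite [P v g]Pg.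
have fS : f \in Supp c by rewrite inE.
have inj : {in f &, injective phi}.
  move=> u v uf vf E; apply/eqP; apply/negP => /negP uv.
  have /and3P[cg gf sub1] := phiP u uf.
  have /and3P[_ _ sub2] := phiP v vf.
  rewrite -E in sub2.
  have fg : f \subset phi u.
    apply/subsetP => x xf; case: (eqVneq x u) => [->|xu].
      by apply: (subsetP sub2); rewrite !inE uv uf.
    by apply: (subsetP sub1); rewrite !inE xu xf.
  move: gf; rewrite eq_sym eqEcard fg /= (hd _ cg) (hd _ cf).
  by rewrite leqnn.
have : (#|phi @: f| <= #|Supp c :\ f|)%N.
  apply: subset_leq_card; apply/subsetP => g /imsetP [v vf ->].
  by have /and3P[cg gf _] := phiP v vf; rewrite !inE gf cg.
by rewrite card_in_imset // (hd _ cf) (cardsD1 f (Supp c)) fS add1n.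
Qed.

Lemma card_bigcup_leq (I T : finType) (A : {set I}) (Fs : I -> {set T}) :
  (#|\bigcup_(i in A) Fs i| <= \sum_(i in A) #|Fs i|)%N.
Proof.
elim/big_rec2: _ => [|i m U _ le]; first by rewrite cards0.
by rewrite (leq_trans (leq_card_setU _ _).1) ?leq_add2l.
Qed.


Lemma facet_adj_sym d : symmetric (@facet_adj n d).
Proof.
move=> x y; rewrite /facet_adj eq_sym; congr (_ && _).
by apply/existsP/existsP => -[f /and3P[a b c]]; exists f; rewrite a b c.
Qed.

Lemma main_lemma (d s : nat) (Z : chain n F) :
  (1 <= d)%N -> simple_dcycle d Z -> (1 <= s)%N ->
  forall S : {set {set 'I_n}}, S \subset Supp Z -> #|S| = s ->
    (#|components d (Supp Z :\: S)| <= s)%N.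
Proof.
move=> d1 [[dch bZ] Z0 simp] s1 S sS cS.
set V := Supp Z :\: S.
have VE x : x \in V = (x \notin S) && (Z x != 0) by rewrite !inE.
clearbody V.
set R := induced_adj d V.
have Rsym : connect_sym R.
  apply: sym_connect_sym => x y; rewrite /R /induced_adj facet_adj_sym.
  by case: (x \in V); case: (y \in V).
set comps := components d V.
have compP C : C \in comps ->
    exists2 rho, rho \in V & C = [set tau in V | connect R rho tau].
  by case/imsetP => rho rV ->; exists rho.
have CV C x : C \in comps -> x \in C -> x \in V.
  by case/compP => rho _ -> ; rewrite inE => /andP[].
have closure C x y : C \in comps -> x \in C -> y \in V -> facet_adj d x y -> y \in C.
  move=> CC xC yV adj; have xV := CV C x CC xC.
  move: xC; case/compP: CC => rho _ ->; rewrite !inE yV => /andP[_ cx].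
  by apply: connect_trans cx (connect1 _); rewrite /R /induced_adj xV yV adj.
have same C C' x : C \in comps -> C' \in comps -> x \in C -> x \in C' -> C = C'.
  case/compP => rho _ ->; case/compP => rho' _ ->; rewrite !inE.
  move=> /andP[_ c1] /andP[_ c2].
  have e : connect R rho rho' by apply: connect_trans c1 _; rewrite Rsym.
  apply/setP => t; rewrite !inE; case: (t \in V) => //=.
  apply/idP/idP => h; first by apply: connect_trans h; rewrite Rsym.
  exact: connect_trans e h.
pose Y (C : {set {set 'I_n}}) := [ffun sigma => if sigma \in C then Z sigma else 0] : chain n F.
pose T (C : {set {set 'I_n}}) := Supp (boundary (Y C)).
have Tface C t : t \in T C -> exists2 sigma, sigma \in C & exists2 v, v \in sigma & t = sigma :\ v.
  rewrite inE => /boundary_supp [sigma]; rewrite ffunE.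
  by case: ifP => [sC _ h|]; [exists sigma | rewrite eqxx].
have Tcard t C : t \in T C -> #|t| = d.
  rewrite inE => /boundary_supp [sigma Ys [v vs ->]].
  have Zs : Z sigma != 0 by move: Ys; rewrite ffunE; case: ifP; rewrite ?eqxx.
  by move: (dch _ Zs); rewrite (cardsD1 v sigma) vs add1n => -[].
have adjface sigma sigma' v v' : sigma != sigma' -> v \in sigma -> v' \in sigma' ->
    sigma :\ v = sigma' :\ v' -> Z sigma != 0 -> facet_adj d sigma sigma'.
  move=> ne vs vs' E Zs; rewrite /facet_adj ne /=; apply/existsP; exists (sigma :\ v).
  rewrite subsetDl {2}E subsetDl !andbT.
  by move: (dch _ Zs); rewrite (cardsD1 v sigma) vs add1n => -[->].
have Tne C : C \in comps -> T C != set0.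
  move=> CC; apply/negP => /eqP T0.
  have bY : boundary (Y C) = 0.
    apply/ffunP => t; rewrite [RHS]ffunE; apply/eqP; apply/negP => h.
    have : t \in T C by rewrite /T inE; apply/negP.
    by rewrite T0 inE.
  have cyc : is_dcycle d (Y C).
    split => // sigma; rewrite ffunE; case: ifP => _; [exact: dch | by rewrite eqxx].
  have sub : Supp (Y C) \subset Supp Z.
    by apply/subsetP => sigma; rewrite !inE ffunE; case: ifP; rewrite ?eqxx.
  have [c Ec] := simp _ cyc sub.
  have [s0 s0S] : exists s0, s0 \in S.
    apply/set0Pn; rewrite -card_gt0 cS //.
  have Zs0 : Z s0 != 0 by move: (subsetP sS _ s0S); rewrite inE.
  have s0C : s0 \notin C by apply/negP => /(CV C _ CC); rewrite VE s0S.
  have := congr1 (fun x : chain n F => x s0) Ec; rewrite !ffunE (negbTE s0C) => /esym/eqP.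
  rewrite mulf_eq0 (negbTE Zs0) orbF => /eqP c0.
  case/compP: CC (CC) => rho rV EC CC.
  have rC : rho \in C by rewrite EC inE rV connect0.
  have := congr1 (fun x : chain n F => x rho) Ec; rewrite !ffunE rC c0 mul0r.
  by move/eqP; move: rV; rewrite VE => /andP[_] /negbTE ->.
pose Faces := \bigcup_(sigma in S) [set sigma :\ v | v in sigma].
have TS C t : C \in comps -> t \in T C -> t \in Faces.
  move=> CC tT; have [s' s'C [v' v's' E']] := Tface C t tT.
  pose Y' := [ffun sigma => if sigma \in C then 0 else Z sigma] : chain n F.
  have bs : boundary Z t = boundary (Y C) t + boundary Y' t.
    rewrite !ffunE -big_split; apply: eq_bigr => sigma _; rewrite !ffunE.
    by case: ifP => _ /=; rewrite mul0r ?addr0 ?add0r.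
  have : boundary Y' t != 0.
    move: tT; rewrite inE => h; apply/negP => /eqP h'.
    move: bs; rewrite h' addr0 bZ ffunE => /esym/eqP; exact/negP.
  case/boundary_supp => sigma; rewrite ffunE; case: ifP => [|sC Zs]; first by rewrite eqxx.
  move=> [v vs tE].
  case: (boolP (sigma \in S)) => sigS.
    by apply/bigcupP; exists sigma => //; apply/imsetP; exists v.
  have sV : sigma \in V by rewrite VE sigS Zs.
  have s'V := CV C s' CC s'C.
  have ne : s' != sigma by apply/eqP => E; rewrite -E s'C in sC.
  have Zs' : Z s' != 0 by move: s'V; rewrite VE => /andP[].
  have := closure C s' sigma CC s'C sV (adjface _ _ _ _ ne v's' vs _ Zs').
  by rewrite sC -E' tE => /(_ erefl).
have Tdisj C C' t : C \in comps -> C' \in comps -> t \in T C -> t \in T C' -> C = C'.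
  move=> CC CC' tT tT'.
  have [s1' s1C [v1 v1s E1]] := Tface C t tT.
  have [s2' s2C [v2 v2s E2]] := Tface C' t tT'.
  case: (eqVneq s1' s2') => [E|ne]; first by apply: (same _ _ s1' CC CC') => //; rewrite E.
  have s1V := CV C s1' CC s1C.
  have s2V := CV C' s2' CC' s2C.
  have Zs1 : Z s1' != 0 by move: s1V; rewrite VE => /andP[].
  have := closure C s1' s2' CC s1C s2V (adjface _ _ _ _ ne v1s v2s _ Zs1).
  rewrite -E1 -E2 => /(_ erefl) s2C1.
  exact: (same _ _ s2' CC CC').
set P := T @: comps.
have cardP : #|P| = #|comps|.
  apply: card_in_imset => C C' CC CC' E.
  have /set0Pn [t tT] := Tne C CC.
  by apply: (Tdisj C C' t) => //; rewrite -E.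
have triv : trivIset P.
  apply/trivIsetP => A B /imsetP[C CC ->] /imsetP[C' CC' ->] ne.
  apply/pred0P => t /=; apply/negbTE; apply/andP => -[h1 h2].
  by rewrite (Tdisj C C' t) ?eqxx in ne.
have low : (#|P| * d.+1 <= \sum_(A in P) #|A|)%N.
  rewrite -sum_nat_const; apply: leq_sum => A /imsetP[C CC ->].
  have /set0Pn [t tT] := Tne C CC.
  apply: (cycle_supp (f := t)) => //; first exact: boundary_boundary.
    by move=> tau h; apply: (Tcard tau C); rewrite inE.
  by move: tT; rewrite inE.
have eqc : (\sum_(A in P) #|A| = #|cover P|)%N by apply/eqP.
have coverF : cover P \subset Faces.
  apply/subsetP => t /bigcupP [A /imsetP[C CC ->] tT]; exact: TS C t CC tT.
have hi : (#|Faces| <= s * d.+1)%N.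
  apply: (leq_trans (card_bigcup_leq _ _)).
  rewrite -cS -sum_nat_const; apply: leq_sum => sigma sigS.
  apply: (leq_trans (leq_imset_card _ _)).
  have Zs : Z sigma != 0 by move: (subsetP sS _ sigS); rewrite inE.
  by rewrite (dch _ Zs).
rewrite -cardP -(leq_pmul2r (ltn0Sn d)).
apply: (leq_trans low); rewrite eqc; apply: leq_trans hi.
exact: subset_leq_card.
Qed.

End Helpers.

Theorem theorem5p5 (F : fieldType) (n d s : nat) (Z : chain n F) :
  (1 <= d)%N -> simple_dcycle d Z -> (1 <= s)%N ->
  forall S : {set {set 'I_n}}, S \subset Supp Z -> #|S| = s ->
    (#|components d (Supp Z :\: S)| <= s)%N.
Proof. exact: main_lemma. Qed.
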